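(* Let $M$ be a combinatorial $3$-manifold with vertex set $V=V_1\dot\cup V_2$, and let $S_{(V_1,V_2)}$ be a connected slicing of $M$ of genus $g$ with $q$ quadrilaterals. Suppose that for some $i\in\{1,2\}$ the induced subcomplex $\operatorname{span}(V_i)$ has dimension $1$, and let $n:=|V_i|$. Then \[ q\ \ge\ 3(n+g-1). \] In particular, this applies to every slicing all of whose facets are quadrilaterals.
   Context: A combinatorial $3$-manifold is a finite pure $3$-dimensional simplicial complex in which the link of every vertex is a combinatorial $2$-sphere. For a set $W$ of vertices, $\operatorname{span}(W)$ is the induced subcomplex of $M$ on $W$ (all simplices of $M$ with all vertices in $W$). A function $f:M\to\mathbb{R}$ is regular simplexwise linear (rsl) if it is linear on every simplex and takes pairwise distinct values on the vertices. Given a partition $V=V_1\dot\cup V_2$ of the vertex set into nonempty sets, choose an rsl-function $f$ with $f(v)<f(w)$ for all $v\in V_1$, $w\in V_2$ and $x_0$ strictly between $\max f(V_1)$ and $\min f(V_2)$; the slicing $S_{(V_1,V_2)}$ is the polyhedral surface $f^{-1}(x_0)$, whose facets are the triangles and quadrilaterals obtained by intersecting $f^{-1}(x_0)$ with the tetrahedra of $M$ meeting both $V_1$ and $V_2$ (a quadrilateral arises from a tetrahedron with exactly two vertices in each part). *)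

(* Defs.v *)
From mathcomp Require Import all_boot all_order all_algebra.
Set Implicit Arguments.
Unset Strict Implicit.
Unset Printing Implicit Defensive.

(* A pure simplicial complex is given by its set of facets [F] over a finite
   vertex type [V]; its faces are all nonempty subsets of facets. *)

(* faces of dimension k-1, i.e. the k-element faces *)
Definition faces (V : finType) (F : {set {set V}}) (k : nat) : {set {set V}} :=
  [set s : {set V} | (#|s| == k) && [exists t in F, s \subset t]].

Definition vertices (V : finType) (F : {set {set V}}) : {set V} :=
  [set x | [exists t in F, x \in t]].

Definition euler2 (V : finType) (F : {set {set V}}) : int :=
  (#|faces F 1|%:Z - #|faces F 2|%:Z + #|faces F 3|%:Z)%R.

(* Combinatorial 2-sphere: a (pure 2-dim) closed connected combinatorial
   surface (every edge in exactly two triangles, every vertex link a single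
   cycle) with Euler characteristic 2. *)
Definition comb_2sphere (V : finType) (F : {set {set V}}) : Prop :=
  [/\ F != set0 /\ (forall t, t \in F -> #|t| = 3),
      (forall e, e \in faces F 2 -> #|[set t in F | e \subset t]| = 2),
      (forall w a b, [set a; w] \in faces F 2 -> [set b; w] \in faces F 2 ->
          connect (fun x y => [set x; y; w] \in F) a b),
      (forall a b, a \in vertices F -> b \in vertices F ->
          connect (fun x y => [set x; y] \in faces F 2) a b)
    & euler2 F = 2%R].

Definition link (V : finType) (T : {set {set V}}) (v : V) : {set {set V}} :=
  [set t :\ v | t in [set t in T | v \in t]].

Definition comb_3manifold (V : finType) (T : {set {set V}}) : Prop :=
  [/\ T != set0,
      (forall t, t \in T -> #|t| = 4)
    & (forall v, v \in vertices T -> comb_2sphere (link T v))].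

Definition span (V : finType) (T : {set {set V}}) (W : {set V}) : {set {set V}} :=
  [set s : {set V} | [&& s != set0, s \subset W & [exists t in T, s \subset t]]].

Definition span_dim (V : finType) (T : {set {set V}}) (W : {set V}) (d : nat) : Prop :=
  (exists2 s, s \in span T W & #|s| = d.+1) /\
  (forall s, s \in span T W -> #|s| <= d.+1).

(* Slicing S_(V1, V2) with V2 = ~: V1, described combinatorially:
   its vertices are the edges of M meeting both parts, its edges come from the
   triangles of M meeting both parts, its facets from the tetrahedra of M
   meeting both parts (quadrilaterals: exactly two vertices in each part). *)
Definition crossing (V : finType) (V1 : {set V}) (s : {set V}) : bool :=
  (s :&: V1 != set0) && (s :\: V1 != set0).

Definition slice_vertices (V : finType) (T : {set {set V}}) (V1 : {set V}) :=
  [set e in faces T 2 | crossing V1 e].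
Definition slice_edges (V : finType) (T : {set {set V}}) (V1 : {set V}) :=
  [set e in faces T 3 | crossing V1 e].
Definition slice_facets (V : finType) (T : {set {set V}}) (V1 : {set V}) :=
  [set t in T | crossing V1 t].
Definition slice_quads (V : finType) (T : {set {set V}}) (V1 : {set V}) :=
  [set t in T | #|t :&: V1| == 2].

Definition slice_euler (V : finType) (T : {set {set V}}) (V1 : {set V}) : int :=
  (#|slice_vertices T V1|%:Z - #|slice_edges T V1|%:Z
     + #|slice_facets T V1|%:Z)%R.

(* Two vertices of the slicing are adjacent iff they span an edge of the
   slicing, i.e. the two edges of M lie in a common triangle of M. *)
Definition slice_connected (V : finType) (T : {set {set V}}) (V1 : {set V}) : Prop :=
  forall e1 e2, e1 \in slice_vertices T V1 -> e2 \in slice_vertices T V1 ->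
    connect (fun x y => [&& x \in slice_vertices T V1, y \in slice_vertices T V1
                          & (x :|: y) \in slice_edges T V1]) e1 e2.

(* Main.v *)
Require Import Defs.
From mathcomp Require Import all_boot all_order all_algebra.
From mathcomp Require Import zify.
Set Implicit Arguments.
Unset Strict Implicit.
Unset Printing Implicit Defensive.

Lemma card_sum (T : finType) (X : {set T}) (P : pred T) :
  #|[set x in X | P x]| = \sum_(x in X) (P x : nat).
Proof.
rewrite -sum1_card [RHS]big_mkcond [LHS]big_mkcond /=.
apply: eq_bigr => x _; rewrite !inE; by case: (x \in X); case: (P x).
Qed.

Lemma dcount (T U : finType) (A : {set T}) (B : {set U}) (R : T -> U -> bool) :
  \sum_(a in A) #|[set b in B | R a b]| = \sum_(b in B) #|[set a in A | R a b]|.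
Proof.
under eq_bigr do rewrite card_sum.
rewrite exchange_big /=.
by apply: eq_bigr => b _; rewrite card_sum.
Qed.

Section Sphere.
Variable V : finType.

Lemma tri_edges (F : {set {set V}}) (t : {set V}) b :
  t \in F -> #|t| = 3 -> b \in t ->
  #|[set e in [set e in faces F 2 | b \in e] | e \subset t]| = 2.
Proof.
move=> tF t3 bt.
have -> : [set e in [set e in faces F 2 | b \in e] | e \subset t] =
          [set [set b; x] | x in t :\ b].
  apply/setP => e; rewrite !inE; apply/idP/idP.
  - case/andP=> /andP [/andP [e2 _] be] et.
    case/cards2P: e2 => y [z [yz ez]]; subst e.
    move: be; rewrite !inE => /orP [/eqP by_|/eqP bz]; subst.
    + apply/imsetP; exists z => //; rewrite !inE eq_sym yz /=.
      by apply: (subsetP et); rewrite !inE eqxx orbT.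
    + apply/imsetP; exists y; last by rewrite setUC.
      rewrite !inE yz /=. by apply: (subsetP et); rewrite !inE eqxx.
  - case/imsetP=> x; rewrite !inE => /andP [xb xt] ->.
    have sub : [set b; x] \subset t.
      by apply/subsetP=> y; rewrite !inE => /orP [/eqP->|/eqP->].
    rewrite cards2 (eq_sym b) xb sub !inE eqxx /= andbT.
    rewrite andbT; apply/existsP; exists t; by rewrite tF sub.
rewrite card_in_imset.
  by move: t3; rewrite (cardsD1 b) bt; case.
move=> x y; rewrite !inE => /andP [xb _] /andP [yb _] exy.
have : x \in [set b; y] by rewrite -exy !inE eqxx orbT.
by rewrite !inE (negbTE xb) /= => /eqP.
Qed.

Lemma sphere_deg (F : {set {set V}}) b :
  (forall t, t \in F -> #|t| = 3) ->
  (forall e, e \in faces F 2 -> #|[set t in F | e \subset t]| = 2) ->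
  (exists2 t, t \in F & b \in t) ->
  #|[set e in faces F 2 | b \in e]| = #|[set t in F | b \in t]| /\
  3 <= #|[set t in F | b \in t]|.
Proof.
move=> F3 F2 [t0 t0F bt0]; split.
  have := dcount [set e in faces F 2 | b \in e] F (fun e t => e \subset t).
  have -> : \sum_(e in [set e in faces F 2 | b \in e]) #|[set t in F | e \subset t]|
     = \sum_(e in [set e in faces F 2 | b \in e]) 2.
    by apply: eq_bigr => e; rewrite inE => /andP [eF _]; apply: F2.
  have -> : \sum_(t in F) #|[set e in [set e in faces F 2 | b \in e] | e \subset t]|
     = \sum_(t in F) 2 * (b \in t).
    apply: eq_bigr => t tF; case bt: (b \in t); first by rewrite tri_edges // F3.
    apply/eqP; rewrite cards_eq0; apply/eqP/setP=> e; rewrite !inE.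
    apply/negbTE; apply/negP=> /andP [/andP [_ be] et].
    by move: bt; rewrite (subsetP et).
  rewrite sum_nat_const -big_distrr /= -card_sum.
  by rewrite mulnC => /eqP; rewrite eqn_mul2l /= => /eqP.
have e0F : exists c, c \in t0 :\ b.
  apply/set0Pn; rewrite -cards_eq0 -(eqn_add2l (b \in t0)) -cardsD1 bt0 F3 //.
case: e0F => c; rewrite !inE => /andP [cb ct0].
set e0 := [set b; c].
have e0F : e0 \in faces F 2.
  rewrite inE cards2 (eq_sym b) cb /=; apply/existsP; exists t0; rewrite t0F /=.
  by apply/subsetP=> y; rewrite !inE => /orP [/eqP->|/eqP->].
have /eqP := F2 _ e0F; case/cards2P=> t1 [t2 [t12 E12]].
have : t1 \in [set t in F | e0 \subset t] by rewrite E12 !inE eqxx.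
have : t2 \in [set t in F | e0 \subset t] by rewrite E12 !inE eqxx orbT.
rewrite !inE => /andP [t2F e0t2] /andP [t1F e0t1].
have bt1 : b \in t1 by apply: (subsetP e0t1); rewrite !inE eqxx.
have bt2 : b \in t2 by apply: (subsetP e0t2); rewrite !inE eqxx.
have : ~~ (t1 \subset t2).
  apply/negP=> s12; move: t12; suff -> : t1 = t2 by rewrite eqxx.
  by apply/eqP; rewrite eqEcard s12 !F3.
case/subsetPn=> x xt1 xt2.
have xb : x != b by apply/negP=> /eqP xb; move: xt2; rewrite xb bt2.
set e1 := [set b; x].
have e1t1 : e1 \subset t1.
  by apply/subsetP=> y; rewrite !inE => /orP [/eqP->|/eqP->].
have e1F : e1 \in faces F 2.
  rewrite inE cards2 (eq_sym b) xb /=; apply/existsP; exists t1; by rewrite t1F.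
have /eqP := F2 _ e1F; case/cards2P=> u [v [uv Euv]].
have : t1 \in [set t in F | e1 \subset t] by rewrite inE t1F.
have Hu : u \in [set t in F | e1 \subset t] by rewrite Euv !inE eqxx.
have Hv : v \in [set t in F | e1 \subset t] by rewrite Euv !inE eqxx orbT.
rewrite Euv !inE => t1uv.
have [t3 [t3F e1t3 t31]] : exists t3, [/\ t3 \in F, e1 \subset t3 & t3 != t1].
  case/orP: t1uv => /eqP ?; subst t1.
  - by exists v; move: Hv; rewrite inE eq_sym => /andP [-> ->].
  - by exists u; move: Hu; rewrite inE => /andP [-> ->].
have xt3 : x \in t3 by apply: (subsetP e1t3); rewrite !inE eqxx orbT.
have bt3 : b \in t3 by apply: (subsetP e1t3); rewrite !inE eqxx.
have t32 : t3 != t2 by apply/negP=> /eqP ?; subst t3; move: xt2; rewrite xt3.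
have sub : t3 |: [set t1; t2] \subset [set t in F | b \in t].
  apply/subsetP=> y; rewrite !inE => /orP [/eqP->|/orP [/eqP->|/eqP->]];
  by apply/andP.
apply: leq_trans (subset_leq_card sub).
by rewrite cardsU1 cards2 t12 !inE negb_or t31 t32.
Qed.

End Sphere.
Section Mfd.
Variable V : finType.
Implicit Types (T : {set {set V}}).

Lemma faces_link T w k :
  faces (link T w) k = [set s :\ w | s in [set s in faces T k.+1 | w \in s]].
Proof.
apply/setP=> x; rewrite inE; apply/idP/idP.
- case/andP=> /eqP xk /existsP [t' /andP [t'L xt']].
  case/imsetP: t'L => t; rewrite inE => /andP [tT wt] Et'; rewrite Et' in xt'.
  have wx : w \notin x by apply/negP=> /(subsetP xt'); rewrite !inE eqxx.
  apply/imsetP; exists (w |: x); last first.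
    by apply/setP=> y; rewrite !inE; case: eqP => // ->; rewrite (negbTE wx).
  rewrite !inE eqxx andbT cardsU1 wx xk /=.
  rewrite add1n eqxx /=; apply/existsP; exists t; rewrite tT /=.
  apply/subsetP=> y; rewrite !inE => /orP [/eqP->//|yx].
  by move: (subsetP xt' y yx); rewrite !inE => /andP [].
- case/imsetP=> s; rewrite !inE => /andP [/andP [/eqP sk /existsP [t /andP [tT st]]] ws] ->.
  move: sk; rewrite (cardsD1 w) ws add1n => -[->]; rewrite eqxx /=.
  apply/existsP; exists (t :\ w); rewrite setSD // andbT.
  by apply/imsetP; exists t => //; rewrite inE tT (subsetP st).
Qed.

Lemma card_faces_link T w k :
  #|faces (link T w) k| = #|[set s in faces T k.+1 | w \in s]|.
Proof.
rewrite faces_link card_in_imset // => s1 s2; rewrite !inE => /andP [_ w1] /andP [_ w2] e.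
by rewrite -(setD1K w1) -(setD1K w2) e.
Qed.

Lemma faces4 T : (forall t, t \in T -> #|t| = 4) -> faces T 4 = T.
Proof.
move=> T4; apply/setP=> s; rewrite inE; apply/idP/idP.
- case/andP=> /eqP s4 /existsP [t /andP [tT st]].
  suff -> : s = t by [].
  by apply/eqP; rewrite eqEcard st s4 T4.
- by move=> sT; rewrite T4 // eqxx /=; apply/existsP; exists s; rewrite sT subxx.
Qed.

Lemma lift_count (Y : {set {set V}}) a (E : {set V}) : a \in E ->
  #|[set s in Y | E \subset s]| =
  #|[set z in [set s :\ a | s in [set s in Y | a \in s]] | E :\ a \subset z]|.
Proof.
move=> aE.
have -> : [set z in [set s :\ a | s in [set s in Y | a \in s]] | E :\ a \subset z]
   = [set s :\ a | s in [set s in Y | E \subset s]].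
  apply/setP=> z; rewrite inE; apply/idP/idP.
  - case/andP=> /imsetP [s]; rewrite inE => /andP [sY as_] -> Es.
    apply/imsetP; exists s => //; rewrite inE sY /=.
    apply/subsetP=> y yE; case: (eqVneq y a) => [->//|ya].
    have : y \in E :\ a by rewrite !inE ya.
    by move/(subsetP Es); rewrite !inE => /andP [].
  - case/imsetP=> s; rewrite inE => /andP [sY Es] ->.
    rewrite setSD // andbT; apply/imsetP; exists s => //.
    by rewrite inE sY (subsetP Es).
rewrite card_in_imset // => s1 s2; rewrite !inE => /andP [_ E1] /andP [_ E2] e.
by rewrite -(setD1K (subsetP E1 _ aE)) -(setD1K (subsetP E2 _ aE)) e.
Qed.

Lemma edge_lemma T E : comb_3manifold T -> E \in faces T 2 ->
  #|[set s in faces T 3 | E \subset s]| = #|[set t in T | E \subset t]| /\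
  3 <= #|[set t in T | E \subset t]|.
Proof.
case=> _ T4 Lk; rewrite inE => /andP [/eqP E2 /existsP [t0 /andP [t0T Et0]]].
have [a aE] : exists a, a \in E.
  by apply/set0Pn; rewrite -cards_eq0 E2.
have : #|E :\ a| == 1 by move: E2; rewrite (cardsD1 a) aE add1n => /eqP.
case/cards1P=> b Eb.
have aV : a \in vertices T.
  by rewrite inE; apply/existsP; exists t0; rewrite t0T (subsetP Et0).
case: (Lk a aV) => [[_ L3] L2 _ _ _].
rewrite (lift_count _ aE) (lift_count T aE) -faces_link Eb.

have S1 : forall X : {set {set V}}, [set z in X | [set b] \subset z] = [set z in X | b \in z].
  by move=> X; apply/setP=> z; rewrite !inE sub1set.
rewrite !S1.
apply: (@sphere_deg _ (link T a)) => //.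
exists (t0 :\ a).
  by apply/imsetP; exists t0 => //; rewrite inE t0T (subsetP Et0).
have : b \in E :\ a by rewrite Eb set11.
rewrite !inE => /andP [-> bE] /=; exact: (subsetP Et0).
Qed.

End Mfd.
Section Main.
Variable V : finType.
Variable T : {set {set V}}.
Variable W : {set V}.
Hypothesis HM : comb_3manifold T.
Hypothesis Hall : forall v : V, v \in vertices T.
Hypothesis Hspan : forall s, s \in Defs.span T W -> #|s| <= 2.

Let m (s : {set V}) := #|s :&: W|.

Lemma T4 : forall t, t \in T -> #|t| = 4.
Proof. by case: HM. Qed.

Lemma m_le2 (s t : {set V}) : t \in T -> s \subset t -> m s <= 2.
Proof.
move=> tT st; rewrite /m; case: (eqVneq (s :&: W) set0) => [->|ne]; first by rewrite cards0.
apply: Hspan; rewrite inE ne subsetIr /=; apply/existsP; exists t.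
by rewrite tT (subset_trans (subsetIl _ _) st).
Qed.

Definition inM (X : {set {set V}}) := forall s, s \in X -> exists2 t, t \in T & s \subset t.

Lemma inM_faces k : inM (faces T k).
Proof. by move=> s; rewrite inE => /andP [_ /existsP [t /andP [tT st]]]; exists t. Qed.

Lemma inM_T : inM T.
Proof. by move=> s sT; exists s. Qed.

Lemma sumW (X : {set {set V}}) : \sum_(w in W) #|[set s in X | w \in s]| = \sum_(s in X) m s.
Proof.
rewrite (dcount W X (fun w s => w \in s)); apply: eq_bigr => s _.
by rewrite /m; apply: eq_card => w; rewrite !inE andbC.
Qed.

Lemma split_m (X : {set {set V}}) : inM X ->
  \sum_(s in X) m s = #|[set s in X | m s == 1]| + 2 * #|[set s in X | m s == 2]|.
Proof.
move=> HX; rewrite !card_sum big_distrr -big_split /=; apply: eq_bigr => s sX.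
case: (HX s sX) => t tT st; move: (m_le2 tT st).
by case: (m s) => [|[|[|]]].
Qed.

Lemma crossing_m (s : {set V}) : crossing W s = (m s != 0) && (m s != #|s|).
Proof.
rewrite /crossing /m -!cards_eq0 cardsD.
have : #|s :&: W| <= #|s| by apply: subset_leq_card; apply: subsetIl.
case: (#|s :&: W|) => [|j] //=; move: #|s| => n Hn.
apply/idP/idP.
- by move=> H; apply/eqP => E; move: H; rewrite E subnn.
- by move=> H; rewrite subn_eq0 -ltnNge ltn_neqAle H Hn.
Qed.

Lemma cross_card (X : {set {set V}}) k : inM X -> (forall s, s \in X -> #|s| = k) -> 2 < k ->
  #|[set s in X | crossing W s]| =
  #|[set s in X | m s == 1]| + #|[set s in X | m s == 2]|.
Proof.
move=> HX Hk k2; rewrite !card_sum -big_split /=; apply: eq_bigr => s sX.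
case: (HX s sX) => t tT st; move: (m_le2 tT st).
rewrite crossing_m (Hk s sX).
case: (m s) => [|[|[|]]] //= _.
- by case: k k2 {Hk} => [|[|]].
- by case: k k2 {Hk} => [|[|[|]]].
Qed.

Lemma cross_card2 : #|[set s in faces T 2 | crossing W s]| =
  #|[set s in faces T 2 | m s == 1]|.
Proof.
rewrite !card_sum; apply: eq_bigr => s sX.
case: (inM_faces sX) => t tT st; move: (m_le2 tT st).
move: sX; rewrite inE crossing_m => /andP [/eqP -> _].
by case: (m s) => [|[|[|]]].
Qed.

Definition EW := [set s in faces T 2 | m s == 2].

Lemma A2_edges (X : {set {set V}}) : inM X ->
  #|[set s in X | m s == 2]| = \sum_(e in EW) #|[set s in X | e \subset s]|.
Proof.
move=> HX; rewrite (dcount EW X (fun e s => e \subset s)) card_sum.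
apply: eq_bigr => s sX; case: (HX s sX) => t tT st.
have ms := m_le2 tT st.
case: eqP => [m2|m2] /=.
- suff -> : [set a in EW | a \subset s] = [set s :&: W] by rewrite cards1.
  apply/setP=> e; rewrite !inE; apply/idP/idP.
  + case/andP=> /andP [/andP [/eqP e2 _] me] es.
    rewrite /m in me m2.
    have eW : e :&: W = e by apply/eqP; rewrite eqEcard subsetIl (eqP me) e2.
    rewrite eqEcard m2 e2 leqnn andbT.
    by rewrite -{1}eW setSI.
  + move/eqP->; rewrite subsetIl andbT.
    rewrite /m in m2 *; rewrite -setIA setIid m2 eqxx andbT /=.
    apply/existsP; exists t.
    by rewrite tT (subset_trans (subsetIl _ _) st).
- suff -> : [set a in EW | a \subset s] = set0 by rewrite cards0.
  apply/setP=> e; rewrite !inE.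
  apply/negbTE/negP=> /andP [/andP [_ me] es].
  have : #|e :&: W| <= m s by apply: subset_leq_card; apply: setSI.
  rewrite /m in me; rewrite (eqP me) => H; apply: m2; apply/eqP; by rewrite eqn_leq ms H.
Qed.

Lemma quad_facts :
  #|[set s in faces T 3 | m s == 2]| = #|[set s in T | m s == 2]| /\
  3 * #|EW| <= #|[set s in T | m s == 2]|.
Proof.
rewrite (A2_edges (@inM_faces 3)) (A2_edges inM_T).
split.
  by apply: eq_bigr => e; rewrite inE => /andP [eF _]; case: (edge_lemma HM eF).
apply: (@leq_trans (\sum_(e in EW) 3)); first by rewrite sum_nat_const mulnC.
apply: leq_sum => e; rewrite inE => /andP [eF _].
by case: (edge_lemma HM eF).
Qed.

Lemma euler_w w : w \in W ->
  #|[set s in faces T 2 | w \in s]| + #|[set s in T | w \in s]| =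
  #|[set s in faces T 3 | w \in s]| + 2.
Proof.
move=> _; case: HM => _ _ Lk; case: (Lk w (Hall w)) => _ _ _ _.
rewrite /euler2 !card_faces_link faces4; last exact: T4.
lia.
Qed.

Lemma main_lemma g : slice_euler T W = (2 - 2 * (g%:Z))%R ->
  3 * (#|W| + g - 1) <= #|slice_quads T W|.
Proof.
move=> He.
have Hs : \sum_(w in W) (#|[set s in faces T 2 | w \in s]| + #|[set s in T | w \in s]|)
   = \sum_(w in W) (#|[set s in faces T 3 | w \in s]| + 2).
  by apply: eq_bigr => w; apply: euler_w.
rewrite !big_split /= !sumW sum_nat_const !split_m in Hs; try exact: inM_faces;
  try exact: inM_T.
case: quad_facts => Q1 Q2.
move: He; rewrite /slice_euler /slice_vertices /slice_edges /slice_facets.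
rewrite cross_card2 (cross_card (k := 3) (@inM_faces 3)) //; last first.
  by move=> s; rewrite inE => /andP [/eqP]. 
rewrite (cross_card inM_T (k := 4)) //; last exact: T4.
have -> : #|slice_quads T W| = #|[set s in T | m s == 2]| by [].
rewrite Q1 in Hs *.
move: Q2; rewrite /EW.
lia.
Qed.

End Main.

Lemma crossingC (V : finType) (V1 s : {set V}) : crossing (~: V1) s = crossing V1 s.
Proof. by rewrite /crossing setDE setCK -setDE andbC. Qed.

Theorem theorem4p4 (V : finType) (T : {set {set V}}) (V1 : {set V})
    (g : nat) (i : bool) :
  comb_3manifold T ->
  (forall v : V, v \in vertices T) ->
  V1 != set0 -> ~: V1 != set0 ->
  slice_connected T V1 ->
  slice_euler T V1 = (2 - 2 * (g%:Z))%R ->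
  span_dim T (if i then V1 else ~: V1) 1 ->
  3 * (#|if i then V1 else ~: V1| + g - 1) <= #|slice_quads T V1|.
Proof.
move=> HM Hall _ _ _ He [_ Hsp].
case: i Hsp => Hsp.
  exact: (main_lemma HM Hall Hsp He).
have E1 : slice_euler T V1 = slice_euler T (~: V1).
  rewrite /slice_euler /slice_vertices /slice_edges /slice_facets.
  have C : forall X : {set {set V}},
      [set e in X | crossing (~: V1) e] = [set e in X | crossing V1 e].
    by move=> X; apply/setP=> e; rewrite !inE crossingC.
  by rewrite !C.
have Q : #|slice_quads T V1| = #|slice_quads T (~: V1)|.
  apply: eq_card => t; rewrite !inE; case tT: (t \in T) => //=.
  have t4 : #|t| = 4 by case: HM => _ H _; apply: H.
  rewrite -setDE cardsD t4.
  have : #|t :&: V1| <= 4 by rewrite -t4; apply: subset_leq_card; apply: subsetIl.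
  by case: (#|t :&: V1|) => [|[|[|[|[|]]]]].
rewrite Q; apply: (main_lemma HM Hall Hsp); by rewrite -E1.
Qed.
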